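(* Let $v^1,\dots,v^k$ be a basis of $\mathfrak h^*$, $G^{ab}=(v^a|v^b)$, and $(G_{ab})$ the inverse matrix of $(G^{ab})$. For a real root $\alpha=\sum_a\alpha_av^a$ define, for $a,b,c,d\in\{1,\dots,k\}$, $$X(\alpha)_{ab\,cd}=\tfrac12\alpha_a\alpha_b\alpha_c\alpha_d-\alpha_{(a}G_{b)(c}\alpha_{d)}+\tfrac14G_{a(c}G_{d)b},$$ where $\alpha_{(a}G_{b)(c}\alpha_{d)}:=\frac14(\alpha_aG_{bc}\alpha_d+\alpha_bG_{ac}\alpha_d+\alpha_aG_{bd}\alpha_c+\alpha_bG_{ad}\alpha_c)$ and $G_{a(c}G_{d)b}:=\frac12(G_{ac}G_{db}+G_{ad}G_{cb})$. Then for all real roots $\alpha,\beta$ with $(\alpha|\beta)=0$, $$\sum_{e,f,g,h=1}^k\big(X(\alpha)_{ab\,ef}G^{eg}G^{fh}X(\beta)_{gh\,cd}-X(\beta)_{ab\,ef}G^{eg}G^{fh}X(\alpha)_{gh\,cd}\big)=0$$ for all $a,b,c,d$, and for all real roots $\alpha,\beta$ with $(\alpha|\beta)=\mp1$, $$\sum_{e,f,g,h=1}^k\big(X(\alpha)_{ab\,ef}G^{eg}G^{fh}X(\beta)_{gh\,cd}+X(\beta)_{ab\,ef}G^{eg}G^{fh}X(\alpha)_{gh\,cd}\big)=\tfrac12X(\alpha\pm\beta)_{ab\,cd}.$$ In particular, with the Clifford algebra $\mathcal S$ and elements $\phi^{ab}_\gamma$ defined below and $\widehat J(\alpha_i):=\sum_{a,b,c,d=1}^k\sum_{\gamma,\delta=1}^lX(\alpha_i)_{ab\,cd}\Gamma(\alpha_i)_{\gamma\delta}\phi^{ab}_\gamma\phi^{cd}_\delta$,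 the assignment $X_i\mapsto\widehat J(\alpha_i)$ extends to a Lie algebra homomorphism $\mathfrak k\to(\mathcal S,[\cdot,\cdot])$, i.e. a finite-dimensional representation of $\mathfrak k$.
   Context: Let $A=(a_{ij})_{1\le i,j\le n}$ be a symmetrizable simply laced generalized Cartan matrix (off-diagonal entries $0$ or $-1$); the Dynkin diagram has an edge between $i\ne j$ iff $a_{ij}=-1$. Let $\mathfrak g$ be the split real Kac–Moody algebra of $A$ with Chevalley generators $e_i,f_i$, Cartan subalgebra $\mathfrak h$ (from a real realization), simple roots $\alpha_1,\dots,\alpha_n\in\mathfrak h^*$, real roots $\Delta^{\mathrm{re}}$, and let $(\cdot|\cdot)$ be the nondegenerate invariant symmetric bilinear form induced on $\mathfrak h^*$, with $(\alpha_i|\alpha_j)=a_{ij}$. Let $\mathfrak k$ be the fixed-point subalgebra of the Chevalley involution ($e_i\mapsto -f_i$, $f_i\mapsto-e_i$, $h\mapsto -h$), with Berman generators $X_i=e_i-f_i$; $\mathfrak k$ is presented by generators $X_1,\dots,X_n$ and relations $[X_i,[X_i,X_j]]=-X_j$ if $a_{ij}=-1$, $[X_i,X_j]=0$ if $a_{ij}=0$. A generalized spin representation is a representation $\rho$ of $\mathfrak k$ with $\rho(X_i)^2=-\frac14\mathrm{id}$. Fix a finite-dimensional real vector space $S$ with positive definite inner product $q_2$ and orthonormal basis $f_1,\dots,f_l$, and a generalized spin representation $\rho:\mathfrak k\to\mathrm{End}(S)$ whose values $\rho(X_i)$ are anti-symmetric real matrices in this basis (such exist, e.g. by realifying the generalized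 spin representations with compact image of Hainke–Köhl–Levy); put $\Gamma(\alpha_i):=2\rho(X_i)$. Let $W=\mathrm{Sym}^2(\mathfrak h^* )$ (symmetric tensors in $\mathfrak h^*\otimes\mathfrak h^*$) with the symmetric bilinear form $q_1$ obtained by restricting $(\cdot|\cdot)\otimes(\cdot|\cdot)$; let $q=q_1\otimes q_2$ on $W\otimes S$, and $\mathcal S$ the Clifford algebra of $W\otimes S$: the tensor algebra modulo the ideal generated by $w\otimes w-\frac12q(w,w)\cdot1$. Put $\phi^{ab}_\gamma:=\frac12(v^a\otimes v^b+v^b\otimes v^a)\otimes f_\gamma\in\mathcal S$. *)

(* Defs.v *)
From HB Require Import structures.
From mathcomp Require Import all_boot all_order all_algebra.
Set Implicit Arguments. Unset Strict Implicit. Unset Printing Implicit Defensive.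
Import Order.TTheory GRing.Theory Num.Theory.
Local Open Scope ring_scope.

Definition simply_laced_GCM (n : nat) (A : 'M[int]_n) : Prop :=
  (forall i, A i i = 2) /\
  (forall i j, i != j -> A i j = 0 \/ A i j = -1) /\
  (forall i j, A i j = 0 <-> A j i = 0).

(* Coordinates: h^* = R^k with basis v^1..v^k, elements are row vectors of
   coordinates (alpha = \sum_a alpha_a v^a), and G a b = G^{ab} = (v^a|v^b). *)
Definition kform (R : nzRingType) (k : nat) (G : 'M[R]_k) (x y : 'rV[R]_k) : R :=
  (x *m G *m y^T) 0 0.

(* Simple reflection s_i(x) = x - <x, alpha_i^vee> alpha_i = x - (x|alpha_i) alpha_i
   (simply laced, (alpha_i|alpha_i) = 2). *)
Definition refl (R : nzRingType) (k : nat) (G : 'M[R]_k) (ai x : 'rV[R]_k) : 'rV[R]_k :=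
  x - kform G x ai *: ai.

Inductive real_root (R : nzRingType) (n k : nat) (G : 'M[R]_k)
    (sr : 'I_n -> 'rV[R]_k) : 'rV[R]_k -> Prop :=
| rr_simple i : real_root G sr (sr i)
| rr_refl i b : real_root G sr b -> real_root G sr (refl G (sr i) b).

Definition Xt (R : fieldType) (k : nat) (G : 'M[R]_k) (al : 'rV[R]_k)
    (a b c d : 'I_k) : R :=
  let Gi := invmx G in
  let x := fun e => al 0 e in
  2^-1 * (x a * x b * x c * x d)
  - 4^-1 * (x a * Gi b c * x d + x b * Gi a c * x d
            + x a * Gi b d * x c + x b * Gi a d * x c)
  + 4^-1 * (2^-1 * (Gi a c * Gi d b + Gi a d * Gi c b)).

Definition contr (R : nzRingType) (k : nat) (G : 'M[R]_k)
    (X Y : 'I_k -> 'I_k -> 'I_k -> 'I_k -> R) (a b c d : 'I_k) : R :=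
  \sum_(e < k) \sum_(f < k) \sum_(g < k) \sum_(h < k)
     X a b e f * G e g * G f h * Y g h c d.

(* Tensors in h^* (x) h^* (x) S: T represents \sum T(a,b,g) v^a (x) v^b (x) f_g. *)
Notation tensor R k l := {ffun 'I_k * 'I_k * 'I_l -> R^o}.

(* Membership in W (x) S, W = Sym^2(h^* ). *)
Definition symtensor (R : nzRingType) (k l : nat) (T : tensor R k l) : Prop :=
  forall a b g, T (a, b, g) = T (b, a, g).

(* q = q1 (x) q2, q1(v^a(x)v^b, v^c(x)v^d) = G^{ac} G^{bd}, q2(f_g,f_h) = delta_gh. *)
Definition qform (R : nzRingType) (k l : nat) (G : 'M[R]_k) (T U : tensor R k l) : R :=
  \sum_(a < k) \sum_(b < k) \sum_(c < k) \sum_(d < k) \sum_(g < l)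
     T (a, b, g) * U (c, d, g) * G a c * G b d.

Definition phi (R : fieldType) (k l : nat) (a b : 'I_k) (g : 'I_l) : tensor R k l :=
  [ffun x => 2^-1 * ((x == (a, b, g))%:R + (x == (b, a, g))%:R)].

(* A "Clifford map" of (W (x) S, q) into an R-algebra B: linear on W (x) S and
   iota(w)^2 = 1/2 q(w,w) 1. The Clifford algebra is the universal such. *)
Definition clifford_map (R : fieldType) (k l : nat) (G : 'M[R]_k)
    (B : algType R) (iota : tensor R k l -> B) : Prop :=
  (forall (c : R) (T U : tensor R k l), symtensor T -> symtensor U ->
      iota (c *: T + U) = c *: iota T + iota U) /\
  (forall T : tensor R k l, symtensor T -> iota T * iota T = (2^-1 * qform G T T)%:A).

(* hat J(alpha_i) = \sum_{abcd} \sum_{g d} X(alpha_i)_{ab cd} Gamma(alpha_i)_{g d}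
   phi^{ab}_g phi^{cd}_d, with Gamma(alpha_i) = 2 rho(X_i). *)
Definition Jhat (R : fieldType) (k l : nat) (G : 'M[R]_k) (B : algType R)
    (iota : tensor R k l -> B) (ai : 'rV[R]_k) (Gam : 'M[R]_l) : B :=
  \sum_(a < k) \sum_(b < k) \sum_(c < k) \sum_(d < k) \sum_(g < l) \sum_(h < l)
    (Xt G ai a b c d * Gam g h) *: (iota (phi R a b g) * iota (phi R c d h)).

Definition lbr (B : nzRingType) (x y : B) : B := x * y - y * x.
Definition mxbr (R : nzRingType) (l : nat) (x y : 'M[R]_l) : 'M[R]_l := x *m y - y *m x.

(* The defining relations of k (Berman presentation) for images Y_i of X_i
   under a map into a Lie algebra with bracket br. *)
Definition k_relations (n : nat) (A : 'M[int]_n) (T : zmodType) (br : T -> T -> T)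
    (Y : 'I_n -> T) : Prop :=
  forall i j : 'I_n,
    (A i j = -1 -> br (Y i) (br (Y i) (Y j)) = - Y j) /\
    (A i j = 0 -> br (Y i) (Y j) = 0).

(* Generalized spin representation with anti-symmetric values, in the
   orthonormal basis f_1..f_l: Rho i = rho(X_i). *)
Definition gen_spin_rep (R : fieldType) (n l : nat) (A : 'M[int]_n)
    (Rho : 'I_n -> 'M[R]_l) : Prop :=
  k_relations A (@mxbr R l) Rho /\
  (forall i, Rho i *m Rho i = - (4^-1 %:M)) /\
  (forall i, (Rho i)^T = - Rho i).

(* Main.v *)
Require Import Defs.
From HB Require Import structures.
From mathcomp Require Import all_boot all_order all_algebra.
From mathcomp Require Import reals.
From mathcomp Require Import ring lra.
From Stdlib Require Import FunctionalExtensionality.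
Set Implicit Arguments. Unset Strict Implicit. Unset Printing Implicit Defensive.
Import Order.TTheory GRing.Theory Num.Theory.
Local Open Scope ring_scope.

Section Tens.
Variable (R : fieldType) (k : nat) (G : 'M[R]_k).

Definition T4 := 'I_k -> 'I_k -> 'I_k -> 'I_k -> R.
Definition KK (P Q : 'M[R]_k) : T4 := fun a b c d => P a c * Q b d.
Definition KX (P Q : 'M[R]_k) : T4 := fun a b c d => P a d * Q b c.
Definition add4 (X Y : T4) : T4 := fun a b c d => X a b c d + Y a b c d.
Definition scl4 (s : R) (X : T4) : T4 := fun a b c d => s * X a b c d.

Lemma fext4 (X Y : T4) : (forall a b c d, X a b c d = Y a b c d) -> X = Y.
Proof.
move=> h; do 4 (apply: functional_extensionality => ?); exact: h.
Qed.

Lemma contr_addl X1 X2 Y : contr G (add4 X1 X2) Y = add4 (contr G X1 Y) (contr G X2 Y).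
Proof.
apply: fext4 => a b c d; rewrite /contr /add4.
rewrite -big_split; apply: eq_bigr => e _.
rewrite -big_split; apply: eq_bigr => f _.
rewrite -big_split; apply: eq_bigr => g _.
rewrite -big_split; apply: eq_bigr => h _ /=; ring.
Qed.

Lemma contr_addr X Y1 Y2 : contr G X (add4 Y1 Y2) = add4 (contr G X Y1) (contr G X Y2).
Proof.
apply: fext4 => a b c d; rewrite /contr /add4.
rewrite -big_split; apply: eq_bigr => e _.
rewrite -big_split; apply: eq_bigr => f _.
rewrite -big_split; apply: eq_bigr => g _.
rewrite -big_split; apply: eq_bigr => h _ /=; ring.
Qed.

Lemma contr_scll s X Y : contr G (scl4 s X) Y = scl4 s (contr G X Y).
Proof.
apply: fext4 => a b c d; rewrite /contr /scl4.
rewrite mulr_sumr; apply: eq_bigr => e _.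
rewrite mulr_sumr; apply: eq_bigr => f _.
rewrite mulr_sumr; apply: eq_bigr => g _.
rewrite mulr_sumr; apply: eq_bigr => h _ /=; ring.
Qed.

Lemma contr_sclr s X Y : contr G X (scl4 s Y) = scl4 s (contr G X Y).
Proof.
apply: fext4 => a b c d; rewrite /contr /scl4.
rewrite mulr_sumr; apply: eq_bigr => e _.
rewrite mulr_sumr; apply: eq_bigr => f _.
rewrite mulr_sumr; apply: eq_bigr => g _.
rewrite mulr_sumr; apply: eq_bigr => h _ /=; ring.
Qed.

Lemma sum4_split (F1 F2 : 'I_k -> 'I_k -> R) :
  \sum_(e < k) \sum_(f < k) \sum_(g < k) \sum_(h < k) F1 e g * F2 f h =
  (\sum_(e < k) \sum_(g < k) F1 e g) * (\sum_(f < k) \sum_(h < k) F2 f h).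
Proof.
rewrite mulr_suml; apply: eq_bigr => e _.
rewrite mulr_suml exchange_big; apply: eq_bigr => f _.
rewrite mulr_sumr; apply: eq_bigr => g _.
by rewrite mulr_sumr.
Qed.

Lemma mx3E (P Q S : 'M[R]_k) x y :
  (P *m Q *m S) x y = \sum_(i < k) \sum_(j < k) P x i * Q i j * S j y.
Proof.
rewrite mxE exchange_big; apply: eq_bigr => j _.
by rewrite mxE mulr_suml.
Qed.

Lemma contr_KK_KK P Q S T :
  contr G (KK P Q) (KK S T) = KK (P *m G *m S) (Q *m G *m T).
Proof.
apply: fext4 => a b c d; rewrite /contr /KK !mx3E -sum4_split.
do 4 (apply: eq_bigr => ? _); ring.
Qed.

Lemma contr_KK_KX P Q S T :
  contr G (KK P Q) (KX S T) = KX (P *m G *m S) (Q *m G *m T).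
Proof.
apply: fext4 => a b c d; rewrite /contr /KK /KX !mx3E -sum4_split.
do 4 (apply: eq_bigr => ? _); ring.
Qed.

Lemma contr_KX_KK P Q S T :
  contr G (KX P Q) (KK S T) = KX (P *m G *m T) (Q *m G *m S).
Proof.
apply: fext4 => a b c d; rewrite /contr /KK /KX !mx3E mulrC -sum4_split.
do 4 (apply: eq_bigr => ? _); ring.
Qed.

Lemma contr_KX_KX P Q S T :
  contr G (KX P Q) (KX S T) = KK (P *m G *m T) (Q *m G *m S).
Proof.
apply: fext4 => a b c d; rewrite /contr /KK /KX !mx3E mulrC -sum4_split.
do 4 (apply: eq_bigr => ? _); ring.
Qed.


End Tens.

Section Core.
Variable (R : numFieldType) (k : nat) (G H : 'M[R]_k).
Hypothesis HG : H *m G = 1%:M.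
Hypothesis GH : G *m H = 1%:M.

Definition uu (x : 'rV[R]_k) := x^T *m x.

Definition Dec (x : 'rV[R]_k) : T4 R k :=
  add4 (scl4 (2^-1) (KK (uu x) (uu x)))
   (add4 (scl4 (- (2^-1 * 2^-1))
     (add4 (add4 (KX (uu x) H) (KK H (uu x))) (add4 (KK (uu x) H) (KX H (uu x)))))
    (scl4 (2^-1 * 2^-1 * 2^-1) (add4 (KK H H) (KX H H)))).

Lemma mulGH (P : 'M[R]_k) : P *m G *m H = P.
Proof. by rewrite -mulmxA GH mulmx1. Qed.
Lemma mulHG (P : 'M[R]_k) : H *m G *m P = P.
Proof. by rewrite HG mul1mx. Qed.
Lemma uuGuu x y : uu x *m G *m uu y = kform G x y *: (x^T *m y).
Proof.
rewrite /uu /kform.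
have -> : x^T *m x *m G *m (y^T *m y) = x^T *m (x *m G *m y^T) *m y by rewrite !mulmxA.
set s := x *m G *m y^T.
by rewrite [in LHS](mx11_scalar s) mul_mx_scalar -scalemxAl.
Qed.

Lemma core0 x y : kform G x x = 2 -> kform G y y = 2 -> kform G x y = 0 -> kform G y x = 0 ->
  contr G (Dec x) (Dec y) = contr G (Dec y) (Dec x).
Proof.
move=> hxx hyy hxy hyx.
rewrite /Dec !(contr_addl, contr_addr, contr_scll, contr_sclr).
rewrite !(contr_KK_KK, contr_KK_KX, contr_KX_KK, contr_KX_KX).
rewrite !(mulGH, mulHG, uuGuu) ?hxx ?hyy ?hxy ?hyx.
apply: fext4 => a b c d; rewrite /add4 /scl4 /KK /KX /uu.
rewrite !(mxE, big_ord1).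
by field.
Qed.

Lemma core1 x y : kform G x x = 2 -> kform G y y = 2 -> kform G x y = -1 -> kform G y x = -1 ->
  add4 (contr G (Dec x) (Dec y)) (contr G (Dec y) (Dec x)) = scl4 (2^-1) (Dec (x + y)).
Proof.
move=> hxx hyy hxy hyx.
rewrite /Dec !(contr_addl, contr_addr, contr_scll, contr_sclr).
rewrite !(contr_KK_KK, contr_KK_KX, contr_KX_KK, contr_KX_KX).
rewrite !(mulGH, mulHG, uuGuu) ?hxx ?hyy ?hxy ?hyx.
apply: fext4 => a b c d; rewrite /add4 /scl4 /KK /KX /uu.
rewrite !(mxE, big_ord1).
by field.
Qed.

Lemma trN (x : 'rV[R]_k) : (- x)^T = - x^T.
Proof. by apply/matrixP => i j; rewrite !mxE. Qed.

Lemma uuN x : uu (- x) = uu x.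
Proof. by rewrite /uu trN mulNmx mulmxN opprK. Qed.

Lemma kformN x y : kform G x (- y) = - kform G x y.
Proof. by rewrite /kform trN mulmxN mxE. Qed.

Lemma DecN x : Dec (- x) = Dec x.
Proof. by rewrite /Dec uuN. Qed.

Lemma core2 x y : kform G x x = 2 -> kform G y y = 2 -> kform G x y = 1 -> kform G y x = 1 ->
  add4 (contr G (Dec x) (Dec y)) (contr G (Dec y) (Dec x)) = scl4 (2^-1) (Dec (x - y)).
Proof.
move=> hxx hyy hxy hyx.
rewrite -(DecN y) core1 //.
- by rewrite /kform trN mulmxN !mulNmx opprK -/(kform G y y) hyy.
- by rewrite kformN hxy.
- by rewrite /kform !mulNmx mxE -/(kform G y x) hyx.
Qed.
End Core.

Lemma zmod5 (V : zmodType) (x1 x2 x3 x4 y : V) : x1 + x3 + y - x4 - x2 - y = x1 - x2 + x3 - x4.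
Proof.
rewrite (addrAC (x1 + x3) y (- x4)) (addrAC (x1 + x3 - x4) y (- x2)) addrK.
by rewrite (addrAC (x1 + x3) (-x4) (-x2)) (addrAC x1 x3 (-x2)).
Qed.

Section Cliff.
Variable (R : fieldType) (B : algType R) (I : finType) (e : I -> B) (q : I -> I -> R).
Hypothesis anti : forall i j, e i * e j + e j * e i = (q i j)%:A.

Lemma sw x y : e x * e y = q x y *: 1 - e y * e x.
Proof. by rewrite -anti addrK. Qed.

Lemma sAl (k : R) (u v : B) : k *: u * v = k *: (u * v).
Proof. by rewrite scalerAl. Qed.
Lemma sAr (k : R) (u v : B) : u * (k *: v) = k *: (u * v).
Proof. by rewrite scalerAr. Qed.

Lemma e4 a b c d : e a * e b * (e c * e d) - e c * e d * (e a * e b) =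
  q b c *: (e a * e d) - q b d *: (e a * e c) + q a c *: (e d * e b) - q a d *: (e c * e b).
Proof.
have h1 : e a * e b * e c * e d = q b c *: (e a * e d) - e a * e c * e b * e d.
  rewrite -[e a * e b * e c]mulrA (sw b c).
  by rewrite !(mulrBr, mulrBl, mulr_algr, mulr_algl, sAl, sAr, mulr1, mul1r, mulrA).
have h2 : e a * e c * e b * e d = q b d *: (e a * e c) - e a * e c * e d * e b.
  rewrite -[e a * e c * e b * e d]mulrA (sw b d).
  by rewrite !(mulrBr, mulrBl, mulr_algr, mulr_algl, sAl, sAr, mulr1, mul1r, mulrA).
have h3 : e a * e c * e d * e b = q a c *: (e d * e b) - e c * e a * e d * e b.
  rewrite (sw a c).
  by rewrite !(mulrBr, mulrBl, mulr_algr, mulr_algl, sAl, sAr, mulr1, mul1r, mulrA).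
have h4 : e c * e a * e d * e b = q a d *: (e c * e b) - e c * e d * e a * e b.
  rewrite -[e c * e a * e d]mulrA (sw a d).
  by rewrite !(mulrBr, mulrBl, mulr_algr, mulr_algl, sAl, sAr, mulr1, mul1r, mulrA).
rewrite !mulrA h1 h2 h3 h4.
set X1 := q b c *: _; set X2 := q b d *: _; set X3 := q a c *: _; set X4 := q a d *: _.
set Y := e c * e d * e a * e b.
rewrite !opprB !addrA.
exact: zmod5.
Qed.

Hypothesis qsym : forall i j, q i j = q j i.

Definition Q (M : I -> I -> R) : B := \sum_i \sum_j M i j *: (e i * e j).
Definition pr (M N : I -> I -> R) i j := \sum_k \sum_l M i k * q k l * N l j.

Section Perm.
Variable F : I -> I -> I -> I -> B.
Lemma sw12 : \sum_a \sum_b \sum_c \sum_d F a b c d = \sum_b \sum_a \sum_c \sum_d F a b c d.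
Proof. exact: exchange_big. Qed.
Lemma sw23 : \sum_a \sum_b \sum_c \sum_d F a b c d = \sum_a \sum_c \sum_b \sum_d F a b c d.
Proof. by apply: eq_bigr => a _; exact: exchange_big. Qed.
Lemma sw34 : \sum_a \sum_b \sum_c \sum_d F a b c d = \sum_a \sum_b \sum_d \sum_c F a b c d.
Proof. by apply: eq_bigr => a _; apply: eq_bigr => b _; exact: exchange_big. Qed.
End Perm.

Lemma permNM (F : I -> I -> I -> I -> B) : \sum_a \sum_b \sum_c \sum_d F a b c d = \sum_c \sum_d \sum_a \sum_b F a b c d.
Proof. by rewrite sw23 sw34 sw12 sw23. Qed.
Lemma permA (F : I -> I -> I -> I -> B) : \sum_a \sum_b \sum_c \sum_d F a b c d = \sum_a \sum_d \sum_b \sum_c F a b c d.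
Proof. by rewrite sw34 sw23. Qed.
Lemma permB (F : I -> I -> I -> I -> B) : \sum_a \sum_b \sum_c \sum_d F a b c d = \sum_a \sum_c \sum_b \sum_d F a b c d.
Proof. by rewrite sw23. Qed.
Lemma permC (F : I -> I -> I -> I -> B) : \sum_a \sum_b \sum_c \sum_d F a b c d = \sum_d \sum_b \sum_c \sum_a F a b c d.
Proof. by rewrite sw34 sw23 sw12 sw23 sw34. Qed.
Lemma permD (F : I -> I -> I -> I -> B) : \sum_a \sum_b \sum_c \sum_d F a b c d = \sum_c \sum_b \sum_d \sum_a F a b c d.
Proof. by rewrite sw23 sw12 sw23 sw34. Qed.

Lemma QMN M N : Q M * Q N =
  \sum_i \sum_j \sum_k \sum_l (M i j * N k l) *: (e i * e j * (e k * e l)).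
Proof.
rewrite /Q mulr_suml; apply: eq_bigr => i _; rewrite mulr_suml; apply: eq_bigr => j _.
rewrite mulr_sumr; apply: eq_bigr => k _; rewrite mulr_sumr; apply: eq_bigr => l _.
by rewrite sAl sAr scalerA.
Qed.

Lemma QNM M N : Q N * Q M =
  \sum_i \sum_j \sum_k \sum_l (M i j * N k l) *: (e k * e l * (e i * e j)).
Proof.
rewrite QMN permNM.
do 4 (apply: eq_bigr => ? _); by rewrite mulrC.
Qed.

Lemma formA M N : Q (pr M N) =
  \sum_i \sum_j \sum_k \sum_l (M i j * q j k * N k l) *: (e i * e l).
Proof.
rewrite permA /Q /pr; apply: eq_bigr => i _; apply: eq_bigr => l _.
rewrite scaler_suml; apply: eq_bigr => j _; by rewrite scaler_suml.
Qed.

Lemma formB M N : (forall i j, N i j = - N j i) -> Q (pr M N) =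
  \sum_i \sum_j \sum_k \sum_l (- (M i j * q j l * N k l)) *: (e i * e k).
Proof.
move=> hN; rewrite permB /Q /pr; apply: eq_bigr => i _; apply: eq_bigr => k _.
rewrite scaler_suml; apply: eq_bigr => j _; rewrite scaler_suml; apply: eq_bigr => l _.
by rewrite (hN l k) mulrN.
Qed.

Lemma formC M N : (forall i j, N i j = - N j i) -> Q (pr N M) =
  \sum_i \sum_j \sum_k \sum_l (- (M i j * N k l * q i k)) *: (e l * e j).
Proof.
move=> hN; rewrite permC /Q /pr; apply: eq_bigr => l _; apply: eq_bigr => j _.
rewrite scaler_suml; apply: eq_bigr => k _; rewrite scaler_suml; apply: eq_bigr => i _.
rewrite (hN l k) (qsym k i); congr (_ *: _); ring.
Qed.

Lemma formD M N : Q (pr N M) =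
  \sum_i \sum_j \sum_k \sum_l (M i j * N k l * q i l) *: (e k * e j).
Proof.
rewrite permD /Q /pr; apply: eq_bigr => k _; apply: eq_bigr => j _.
rewrite scaler_suml; apply: eq_bigr => l _; rewrite scaler_suml; apply: eq_bigr => i _.
rewrite (qsym l i); congr (_ *: _); ring.
Qed.

Lemma sum4D (F1 F2 : I -> I -> I -> I -> B) :
  \sum_a \sum_b \sum_c \sum_d F1 a b c d + \sum_a \sum_b \sum_c \sum_d F2 a b c d =
  \sum_a \sum_b \sum_c \sum_d (F1 a b c d + F2 a b c d).
Proof.
rewrite -big_split; apply: eq_bigr => a _; rewrite -big_split; apply: eq_bigr => b _.
rewrite -big_split; apply: eq_bigr => c _; by rewrite -big_split.
Qed.

Lemma sum4B (F1 F2 : I -> I -> I -> I -> B) :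
  \sum_a \sum_b \sum_c \sum_d F1 a b c d - \sum_a \sum_b \sum_c \sum_d F2 a b c d =
  \sum_a \sum_b \sum_c \sum_d (F1 a b c d - F2 a b c d).
Proof.
rewrite -sumrB; apply: eq_bigr => a _; rewrite -sumrB; apply: eq_bigr => b _.
rewrite -sumrB; apply: eq_bigr => c _; by rewrite -sumrB.
Qed.

Lemma lin4 (c s1 s2 s3 s4 : R) (v1 v2 v3 v4 : B) :
  c *: (s1 *: v1 - s2 *: v2 + s3 *: v3 - s4 *: v4) =
  (c * s1) *: v1 + (- (c * s2)) *: v2 - ((- (c * s3)) *: v3 + (c * s4) *: v4).
Proof.
rewrite !scalerDr !scalerN !scalerA !scaleNr.
by rewrite opprD opprK !addrA.
Qed.

Lemma Qlin X Y : Q X + Q X - (Q Y + Q Y) = Q (fun i j => 2 * (X i j - Y i j)).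
Proof.
rewrite /Q -!big_split -sumrB; apply: eq_bigr => i _ /=.
rewrite -!big_split -sumrB; apply: eq_bigr => j _ /=.
by rewrite -!scalerDl -scalerBl; congr (_ *: _); ring.
Qed.

Lemma Q_br M N : (forall i j, M i j = - M j i) -> (forall i j, N i j = - N j i) ->
  lbr (Q M) (Q N) = Q (fun i j => 2 * (pr M N i j - pr N M i j)).
Proof.
move=> hM hN.
rewrite -Qlin {1}formA formB // {1}formC // formD /lbr QMN QNM.
rewrite !sum4D !sum4B.
do 4 (apply: eq_bigr => ? _).
rewrite -scalerBr e4 lin4.
congr (_ *: _ + _ *: _ - (_ *: _ + _ *: _)); ring.
Qed.

Lemma Q_ext M M' : (forall i j, M i j = M' i j) -> Q M = Q M'.
Proof. by move=> h; apply: eq_bigr => i _; apply: eq_bigr => j _; rewrite h. Qed.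
Lemma Q0 M : (forall i j, M i j = 0) -> Q M = 0.
Proof. by move=> h; apply: big1 => i _; apply: big1 => j _; rewrite h scale0r. Qed.
Lemma QN M : Q (fun i j => - M i j) = - Q M.
Proof.
rewrite /Q -sumrN; apply: eq_bigr => i _; rewrite -sumrN; apply: eq_bigr => j _.
by rewrite scaleNr.
Qed.
Lemma pr_anti M N : (forall i j, M i j = - M j i) -> (forall i j, N i j = - N j i) ->
  forall i j, pr M N j i = pr N M i j.
Proof.
move=> hM hN i j; rewrite /pr exchange_big; apply: eq_bigr => l _; apply: eq_bigr => k _.
rewrite (hM j k) (hN l i) (qsym k l); ring.
Qed.
Lemma pr_linr M N1 N2 a i j :
  pr M (fun i j => a * (N1 i j - N2 i j)) i j = a * (pr M N1 i j - pr M N2 i j).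
Proof.
rewrite /pr -sumrB mulr_sumr; apply: eq_bigr => k _.
rewrite -sumrB mulr_sumr; apply: eq_bigr => l _; ring.
Qed.
Lemma pr_linl M1 M2 N a i j :
  pr (fun i j => a * (M1 i j - M2 i j)) N i j = a * (pr M1 N i j - pr M2 N i j).
Proof.
rewrite /pr -sumrB mulr_sumr; apply: eq_bigr => k _.
rewrite -sumrB mulr_sumr; apply: eq_bigr => l _; ring.
Qed.
End Cliff.

Lemma sum1 (T : finType) (V : nmodType) (x : T) (F : T -> V) :
  (forall y, y != x -> F y = 0) -> \sum_y F y = F x.
Proof. by move=> h; rewrite (bigD1 x) //= big1 ?addr0. Qed.

Lemma sumP (A B : finType) (V : nmodType) (F : A * B -> V) :
  \sum_(p : A * B) F p = \sum_a \sum_b F (a, b).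
Proof. by rewrite (pair_bigA _ (fun a b => F (a, b))); apply: eq_bigr => -[a b]. Qed.

Section PermG.
Variable (T : finType) (V : nmodType) (F : T -> T -> T -> T -> V).
Lemma gsw12 : \sum_a \sum_b \sum_c \sum_d F a b c d = \sum_b \sum_a \sum_c \sum_d F a b c d.
Proof. exact: exchange_big. Qed.
Lemma gsw23 : \sum_a \sum_b \sum_c \sum_d F a b c d = \sum_a \sum_c \sum_b \sum_d F a b c d.
Proof. by apply: eq_bigr => a _; exact: exchange_big. Qed.
Lemma gsw34 : \sum_a \sum_b \sum_c \sum_d F a b c d = \sum_a \sum_b \sum_d \sum_c F a b c d.
Proof. by apply: eq_bigr => a _; apply: eq_bigr => b _; exact: exchange_big. Qed.
End PermG.
Lemma gpermNM (T : finType) (V : nmodType) (F : T -> T -> T -> T -> V) :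
  \sum_a \sum_b \sum_c \sum_d F a b c d = \sum_c \sum_d \sum_a \sum_b F a b c d.
Proof. by rewrite gsw23 gsw34 gsw12 gsw23. Qed.

Section Phi.
Variable (R : numFieldType) (k l : nat) (G : 'M[R]_k).
Hypothesis GT : G^T = G.

Lemma Gsym a b : G a b = G b a.
Proof. by rewrite -{1}GT mxE. Qed.

Lemma tD (T U : tensor R k l) x : (T + U) x = T x + U x.
Proof. by rewrite ffunE. Qed.
Lemma tZ c (T : tensor R k l) x : (c *: T) x = c * T x.
Proof. by rewrite ffunE. Qed.

Lemma qformDl (T1 T2 U : tensor R k l) : qform G (T1 + T2) U = qform G T1 U + qform G T2 U.
Proof.
rewrite /qform -big_split; apply: eq_bigr => a _; rewrite -big_split; apply: eq_bigr => b _.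
rewrite -big_split; apply: eq_bigr => c _; rewrite -big_split; apply: eq_bigr => d _.
rewrite -big_split; apply: eq_bigr => g _ /=; rewrite tD; ring.
Qed.
Lemma qformDr (T U1 U2 : tensor R k l) : qform G T (U1 + U2) = qform G T U1 + qform G T U2.
Proof.
rewrite /qform -big_split; apply: eq_bigr => a _; rewrite -big_split; apply: eq_bigr => b _.
rewrite -big_split; apply: eq_bigr => c _; rewrite -big_split; apply: eq_bigr => d _.
rewrite -big_split; apply: eq_bigr => g _ /=; rewrite tD; ring.
Qed.
Lemma qformZl s (T U : tensor R k l) : qform G (s *: T) U = s * qform G T U.
Proof.
rewrite /qform mulr_sumr; apply: eq_bigr => a _; rewrite mulr_sumr; apply: eq_bigr => b _.
rewrite mulr_sumr; apply: eq_bigr => c _; rewrite mulr_sumr; apply: eq_bigr => d _.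
rewrite mulr_sumr; apply: eq_bigr => g _ /=; rewrite tZ; ring.
Qed.
Lemma qformZr s (T U : tensor R k l) : qform G T (s *: U) = s * qform G T U.
Proof.
rewrite /qform mulr_sumr; apply: eq_bigr => a _; rewrite mulr_sumr; apply: eq_bigr => b _.
rewrite mulr_sumr; apply: eq_bigr => c _; rewrite mulr_sumr; apply: eq_bigr => d _.
rewrite mulr_sumr; apply: eq_bigr => g _ /=; rewrite tZ; ring.
Qed.

Definition pt (x : 'I_k * 'I_k * 'I_l) : tensor R k l := [ffun y => ((y == x)%:R : R)].

Lemma phi_pt a b g : phi R a b g = 2^-1 *: (pt (a, b, g) + pt (b, a, g)).
Proof. by apply/ffunP => y; rewrite !ffunE. Qed.

Lemma qform_pt a b g c d h :
  qform G (pt (a, b, g)) (pt (c, d, h)) = (g == h)%:R * G a c * G b d.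
Proof.
rewrite /qform (sum1 (x := a)) => [|a' ne]; last first.
  do 4 (apply: big1 => ? _); by rewrite !ffunE !xpair_eqE (negbTE ne) /= !mul0r.
rewrite (sum1 (x := b)) => [|b' ne]; last first.
  do 3 (apply: big1 => ? _); by rewrite !ffunE !xpair_eqE (negbTE ne) /= ?andbF !mul0r.
rewrite (sum1 (x := c)) => [|c' ne]; last first.
  do 2 (apply: big1 => ? _); by rewrite !ffunE !xpair_eqE (negbTE ne) /= !mulr0 !mul0r.
rewrite (sum1 (x := d)) => [|d' ne]; last first.
  do 1 (apply: big1 => ? _); by rewrite !ffunE !xpair_eqE (negbTE ne) /= ?andbF !mulr0 !mul0r.
rewrite (sum1 (x := g)) => [|g' ne]; last first.
  by rewrite !ffunE !xpair_eqE (negbTE ne) /= ?andbF !mul0r.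
by rewrite !ffunE !xpair_eqE !eqxx /= mul1r.
Qed.

Lemma q_phi (a b : 'I_k) (g : 'I_l) (c d : 'I_k) (h : 'I_l) :
  qform G (phi R a b g) (phi R c d h) =
  (g == h)%:R * 2^-1 * (G a c * G b d + G a d * G b c).
Proof.
rewrite !phi_pt qformZl qformZr !qformDl !qformDr !qform_pt.
rewrite (Gsym b c) (Gsym b d); by field.
Qed.

Lemma phi_sym (a b : 'I_k) (g : 'I_l) : symtensor (phi R a b g).
Proof.
move=> x y h; rewrite !ffunE !xpair_eqE.
by rewrite (andbC (x == a)) (andbC (x == b)) addrC.
Qed.

Lemma qform_sym (T U : tensor R k l) : qform G T U = qform G U T.
Proof.
rewrite /qform [RHS]gpermNM.
apply: eq_bigr => x _; apply: eq_bigr => y _; apply: eq_bigr => z _; apply: eq_bigr => w _.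
apply: eq_bigr => g _; rewrite (Gsym z x) (Gsym w y); ring.
Qed.

Lemma anti_cl (B : algType R) (iota : tensor R k l -> B) : clifford_map G iota ->
  forall T U, symtensor T -> symtensor U ->
  iota T * iota U + iota U * iota T = (qform G T U)%:A.
Proof.
move=> [lin sq] T U hT hU.
have hTU : symtensor (T + U) by move=> a b g; rewrite !tD hT hU.
have hs : iota (T + U) = iota T + iota U by have := lin 1 T U hT hU; rewrite !scale1r.
have := sq _ hTU; rewrite hs mulrDl !mulrDr (sq _ hT) (sq _ hU).
rewrite !qformDl !qformDr (qform_sym U T) => h.
have e : forall (x y z w : B), y + z = (x + y + (z + w)) - x - w.
  by move=> x y z w; rewrite addrA (addrAC x y z) -(addrA x) -addrA (addrC x) addrK addrK addrC.
rewrite (e (2^-1 * qform G T T)%:A _ _ (2^-1 * qform G U U)%:A) h -!scalerBl.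
congr (_ *: _); by field.
Qed.
End Phi.

Lemma split_prod (R : comPzRingType) (A1 A2 : finType) (f : A1 -> A1 -> R) (g : A2 -> A2 -> R) :
  \sum_(K : A1 * A2) \sum_(L : A1 * A2) f K.1 L.1 * g K.2 L.2 =
  (\sum_k1 \sum_l1 f k1 l1) * (\sum_k2 \sum_l2 g k2 l2).
Proof.
transitivity (\sum_k1 \sum_k2 \sum_l1 \sum_l2 f k1 l1 * g k2 l2).
  rewrite sumP; apply: eq_bigr => k1 _; apply: eq_bigr => k2 _; by rewrite sumP.
rewrite mulr_suml; apply: eq_bigr => k1 _; rewrite mulr_suml exchange_big.
apply: eq_bigr => l1 _; rewrite mulr_sumr; apply: eq_bigr => k2 _.
by rewrite mulr_sumr.
Qed.

Section Spin.
Variable (R : realFieldType) (k l : nat) (G : 'M[R]_k).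
Hypothesis GT : G^T = G.

Definition Ix := ('I_k * 'I_k * 'I_l)%type.
Definition TT (X : T4 R k) (Gm : 'M[R]_l) (I J : Ix) : R :=
  X I.1.1 I.1.2 J.1.1 J.1.2 * Gm I.2 J.2.
Definition qq (I J : Ix) : R :=
  (I.2 == J.2)%:R * 2^-1 * (G I.1.1 J.1.1 * G I.1.2 J.1.2 + G I.1.1 J.1.2 * G I.1.2 J.1.1).

Lemma contr_sym2 (X Y : T4 R k) : (forall a b c d, Y a b c d = Y b a c d) -> forall a b c d,
  \sum_(e < k) \sum_(f < k) \sum_(g < k) \sum_(h < k)
     X a b e f * (2^-1 * (G e g * G f h + G e h * G f g)) * Y g h c d = contr G X Y a b c d.
Proof.
move=> Ys a b c d.
have E2 : \sum_(e < k) \sum_(f < k) \sum_(g < k) \sum_(h < k)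
     X a b e f * G e h * G f g * Y g h c d = contr G X Y a b c d.
  rewrite /contr; apply: eq_bigr => e _; apply: eq_bigr => f _; rewrite exchange_big.
  apply: eq_bigr => g _; apply: eq_bigr => h _; by rewrite Ys.
transitivity (2^-1 * (contr G X Y a b c d + contr G X Y a b c d)); last by field.
rewrite -{2}E2 /contr -big_split mulr_sumr; apply: eq_bigr => e _.
rewrite -big_split mulr_sumr; apply: eq_bigr => f _.
rewrite -big_split mulr_sumr; apply: eq_bigr => g _.
rewrite -big_split mulr_sumr; apply: eq_bigr => h _ /=; ring.
Qed.

Lemma prodq (X Y : T4 R k) (Gm Dm : 'M[R]_l) :
  (forall a b c d, Y a b c d = Y b a c d) -> forall I J,
  pr qq (TT X Gm) (TT Y Dm) I J = TT (contr G X Y) (Gm *m Dm) I J.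
Proof.
move=> Ys I J.
pose f (p p' : 'I_k * 'I_k) := X I.1.1 I.1.2 p.1 p.2 *
   (2^-1 * (G p.1 p'.1 * G p.2 p'.2 + G p.1 p'.2 * G p.2 p'.1)) * Y p'.1 p'.2 J.1.1 J.1.2.
pose g (x y : 'I_l) := Gm I.2 x * ((x == y)%:R * Dm y J.2).
transitivity (\sum_(K : Ix) \sum_(L : Ix) f K.1 L.1 * g K.2 L.2).
  apply: eq_bigr => K _; apply: eq_bigr => L _; rewrite /TT /qq /f /g; ring.
rewrite split_prod /TT; congr (_ * _).
  rewrite -contr_sym2 // sumP; apply: eq_bigr => e _; apply: eq_bigr => f' _.
  by rewrite sumP.
rewrite mxE; apply: eq_bigr => x _; rewrite (sum1 (x := x)) /g ?eqxx ?mul1r // => y ne.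
by rewrite eq_sym (negbTE ne) mul0r mulr0.
Qed.

End Spin.

Section KF.
Variable (R : numFieldType) (k : nat) (G : 'M[R]_k).
Hypothesis GT : G^T = G.

Lemma trD (x y : 'rV[R]_k) : (x + y)^T = x^T + y^T.
Proof. by apply/matrixP => i j; rewrite !mxE. Qed.
Lemma trB (x y : 'rV[R]_k) : (x - y)^T = x^T - y^T.
Proof. by apply/matrixP => i j; rewrite !mxE. Qed.
Lemma trZ s (x : 'rV[R]_k) : (s *: x)^T = s *: x^T.
Proof. by apply/matrixP => i j; rewrite !mxE. Qed.

Lemma kformDl x y z : kform G (x + y) z = kform G x z + kform G y z.
Proof. by rewrite /kform !mulmxDl mxE. Qed.
Lemma kformDr x y z : kform G x (y + z) = kform G x y + kform G x z.
Proof. by rewrite /kform trD mulmxDr mxE. Qed.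
Lemma kformBl x z w s : kform G (x - s *: z) w = kform G x w - s * kform G z w.
Proof. by rewrite /kform !mulmxBl -!scalemxAl !mxE. Qed.
Lemma kformBr w x z s : kform G w (x - s *: z) = kform G w x - s * kform G w z.
Proof. by rewrite /kform trB mulmxBr trZ -scalemxAr !mxE. Qed.
Lemma kform_sym x y : kform G x y = kform G y x.
Proof.
rewrite /kform -[in LHS](trmxK (x *m G *m y^T)) [in LHS]mxE.
by rewrite !trmx_mul trmxK GT mulmxA.
Qed.

Lemma rr_norm n (sr : 'I_n -> 'rV[R]_k) : (forall i, kform G (sr i) (sr i) = 2) ->
  forall al, real_root G sr al -> kform G al al = 2.
Proof.
move=> hs al; elim => [i | i b _ IH]; first exact: hs.
rewrite /refl kformBl !kformBr IH hs (kform_sym (sr i) b); ring.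
Qed.

Hypothesis Gu : G \in unitmx.

Lemma HT x y : invmx G x y = invmx G y x.
Proof. by rewrite -[in LHS]GT -trmx_inv mxE. Qed.

Lemma Xt_dec x : Xt G x = Dec (invmx G) x.
Proof.
apply: fext4 => a b c d; rewrite /Xt /Dec /add4 /scl4 /KK /KX /uu /=.
have HT' := HT; move: (invmx G) HT' => H HT'.
rewrite !(mxE, big_ord1).
rewrite (HT' d b) (HT' c b); by field.
Qed.

Lemma Xt_sym1 x a b c d : Xt G x a b c d = Xt G x b a c d.
Proof.
rewrite Xt_dec; have HT' := HT; move: (invmx G) HT' => H HT'.
rewrite /Dec /add4 /scl4 /KK /KX /uu !(mxE, big_ord1); ring.
Qed.

Lemma Xt_sym2 x a b c d : Xt G x c d a b = Xt G x a b c d.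
Proof.
rewrite Xt_dec; have HT' := HT; move: (invmx G) HT' => H HT'.
rewrite /Dec /add4 /scl4 /KK /KX /uu !(mxE, big_ord1).
rewrite (HT' c a) (HT' d b) (HT' c b) (HT' d a); ring.
Qed.

Lemma HG : invmx G *m G = 1%:M. Proof. exact: mulVmx. Qed.
Lemma GH : G *m invmx G = 1%:M. Proof. exact: mulmxV. Qed.

Lemma part1 x y : kform G x x = 2 -> kform G y y = 2 -> kform G x y = 0 ->
  contr G (Xt G x) (Xt G y) = contr G (Xt G y) (Xt G x).
Proof.
move=> hx hy hxy; rewrite !Xt_dec; apply: core0 => //; [exact: HG | exact: GH |].
by rewrite kform_sym.
Qed.

Lemma part2 x y : kform G x x = 2 -> kform G y y = 2 -> kform G x y = -1 ->
  add4 (contr G (Xt G x) (Xt G y)) (contr G (Xt G y) (Xt G x)) = scl4 2^-1 (Xt G (x + y)).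
Proof.
move=> hx hy hxy; rewrite !Xt_dec; apply: core1 => //; [exact: HG | exact: GH |].
by rewrite kform_sym.
Qed.

Lemma part3 x y : kform G x x = 2 -> kform G y y = 2 -> kform G x y = 1 ->
  add4 (contr G (Xt G x) (Xt G y)) (contr G (Xt G y) (Xt G x)) = scl4 2^-1 (Xt G (x - y)).
Proof.
move=> hx hy hxy; rewrite !Xt_dec; apply: core2 => //; [exact: HG | exact: GH |].
by rewrite kform_sym.
Qed.

Lemma part3' x y : kform G x x = 2 -> kform G y y = 2 -> kform G x y = -1 ->
  add4 (contr G (Xt G x) (Xt G (x + y))) (contr G (Xt G (x + y)) (Xt G x)) = scl4 2^-1 (Xt G y).
Proof.
move=> hx hy hxy.
have -> : Xt G y = Xt G (x - (x + y)) by rewrite !Xt_dec opprD addrA subrr add0r DecN.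
apply: part3 => //; rewrite ?kformDl !kformDr ?hx ?hy ?hxy ?(kform_sym y x) ?hxy; ring.
Qed.

End KF.

Section Rho.
Variable (R : realFieldType) (l : nat).

Lemma rho3 (ri rj : 'M[R]_l) : ri *m ri = -(4^-1%:M) -> mxbr ri (mxbr ri rj) = - rj ->
  ri *m rj *m ri = 4^-1 *: rj.
Proof.
move=> h2 h; move: h; rewrite /mxbr mulmxBr mulmxBl !mulmxA h2 -[rj *m ri *m ri]mulmxA h2.
rewrite mulNmx mulmxN mul_scalar_mx mul_mx_scalar.
move: (ri *m rj *m ri) => u h.
apply/matrixP => x y; have := congr1 (fun A : 'M[R]_l => A x y) h; rewrite !mxE => h'; lra.
Qed.

Lemma mSl a (A B : 'M[R]_l) : (a *: A) *m B = a *: (A *m B).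
Proof. by rewrite scalemxAl. Qed.
Lemma mSr a (A B : 'M[R]_l) : A *m (a *: B) = a *: (A *m B).
Proof. by rewrite scalemxAr. Qed.

Lemma gam_rel (ri rj : 'M[R]_l) : ri *m ri = -(4^-1%:M) -> mxbr ri (mxbr ri rj) = - rj ->
  let gi := 2%:R *: ri in let gj := 2%:R *: rj in
  [/\ gi *m (gi *m gj) = - gj, gi *m (gj *m gi) = gj, gi *m gj *m gi = gj
    & gj *m gi *m gi = - gj].
Proof.
move=> h2 h gi gj; have h3 := rho3 h2 h.
rewrite /gi /gj !(mSl, mSr, scalerA).
split.
- rewrite mulmxA h2 mulNmx mul_scalar_mx; apply/matrixP => x y; rewrite !mxE; by field.
- rewrite mulmxA h3; apply/matrixP => x y; rewrite !mxE; by field.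
- rewrite h3; apply/matrixP => x y; rewrite !mxE; by field.
- rewrite -mulmxA h2 mulmxN mul_mx_scalar; apply/matrixP => x y; rewrite !mxE; by field.
Qed.

Lemma gam_comm (ri rj : 'M[R]_l) : mxbr ri rj = 0 ->
  (2%:R *: ri) *m (2%:R *: rj) = (2%:R *: rj) *m (2%:R *: ri).
Proof.
move=> h; have e : ri *m rj = rj *m ri by apply/eqP; rewrite -subr_eq0; apply/eqP.
by rewrite -!scalemxAl -!scalemxAr e.
Qed.

Lemma gam_anti (ri : 'M[R]_l) : ri^T = - ri -> forall x y,
  (2%:R *: ri) x y = - (2%:R *: ri) y x.
Proof.
move=> h x y; have := congr1 (fun A : 'M[R]_l => A y x) h; rewrite !mxE => ->; ring.
Qed.
End Rho.


Lemma Jhat_Q (R : realFieldType) k l (G : 'M[R]_k) (B : algType R)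
   (iota : tensor R k l -> B) x (Gm : 'M[R]_l) :
  Jhat G iota x Gm = Q (fun I : Ix k l => iota (phi R I.1.1 I.1.2 I.2)) (TT (Xt G x) Gm).
Proof.
symmetry; rewrite /Jhat /Q sumP sumP.
apply: eq_bigr => a _; apply: eq_bigr => b _.
rewrite exchange_big sumP sumP; apply: eq_bigr => c _; apply: eq_bigr => d _.
by rewrite exchange_big.
Qed.

Lemma pr_extr (R : fieldType) (I : finType) (q M N N' : I -> I -> R) :
  (forall i j, N i j = N' i j) -> forall i j, pr q M N i j = pr q M N' i j.
Proof. by move=> h i j; apply: eq_bigr => k _; apply: eq_bigr => l _; rewrite h. Qed.
Lemma pr_extl (R : fieldType) (I : finType) (q M M' N : I -> I -> R) :
  (forall i j, M i j = M' i j) -> forall i j, pr q M N i j = pr q M' N i j.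
Proof. by move=> h i j; apply: eq_bigr => k _; apply: eq_bigr => l _; rewrite h. Qed.

Lemma contr_sym1 (R : fieldType) k (G : 'M[R]_k) (X Y : T4 R k) :
  (forall a b c d, X a b c d = X b a c d) ->
  forall a b c d, contr G X Y a b c d = contr G X Y b a c d.
Proof.
move=> h a b c d; apply: eq_bigr => e _; apply: eq_bigr => f _; apply: eq_bigr => g _.
by apply: eq_bigr => i _; rewrite h.
Qed.

Lemma solve4 (R : numFieldType) (c1 c2 c3 c4 x r : R) :
  c1 + c2 + (c3 + c4) = 2^-1 * (2^-1 * x) ->
  2 * (2 * (c1 * - r - c2 * r) - 2 * (c3 * r - c4 * - r)) = - (x * r).
Proof.
move=> h; have -> : x = 2 * 2 * (c1 + c2 + (c3 + c4)) by rewrite h; field.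
ring.
Qed.

Lemma mxNE (R : ringType) l (M : 'M[R]_l) x y : (- M) x y = - M x y.
Proof. by rewrite mxE. Qed.

Unset Implicit Arguments.

Theorem proposition6p3 (R : realType) (n k l : nat) (A : 'M[int]_n)
    (G : 'M[R]_k) (sr : 'I_n -> 'rV[R]_k) (Rho : 'I_n -> 'M[R]_l) :
  simply_laced_GCM A ->
  k = (2 * n - \rank (map_mx (fun z : int => z%:~R : R) A))%N ->
  row_free (\matrix_(i < n) sr i) ->
  G^T = G -> G \in unitmx ->
  (forall i j, kform G (sr i) (sr j) = (A i j)%:~R) ->
  gen_spin_rep A Rho ->
  (forall al be, real_root G sr al -> real_root G sr be ->
     kform G al be = 0 ->
     forall a b c d,
       contr G (Xt G al) (Xt G be) a b c d - contr G (Xt G be) (Xt G al) a b c d = 0)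
  /\
  (forall al be, real_root G sr al -> real_root G sr be ->
     kform G al be = -1 ->
     forall a b c d,
       contr G (Xt G al) (Xt G be) a b c d + contr G (Xt G be) (Xt G al) a b c d
       = 2^-1 * Xt G (al + be) a b c d)
  /\
  (forall al be, real_root G sr al -> real_root G sr be ->
     kform G al be = 1 ->
     forall a b c d,
       contr G (Xt G al) (Xt G be) a b c d + contr G (Xt G be) (Xt G al) a b c d
       = 2^-1 * Xt G (al - be) a b c d)
  /\
  (forall (B : algType R) (iota : tensor R k l -> B),
     clifford_map G iota ->
     k_relations A (@lbr B) (fun i => Jhat G iota (sr i) (2%:R *: Rho i))).
Proof.
move=> [Ad [Aoff Asym]] _ _ GT Gu hA [krel [hsq hRT]].
have hs : forall i, kform G (sr i) (sr i) = 2 by move=> i; rewrite hA Ad.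
have rn := rr_norm GT hs.
split; [|split; [|split]].
- move=> al be ral rbe h a b c d.
  by rewrite (part1 GT Gu (rn _ ral) (rn _ rbe) h) subrr.
- move=> al be ral rbe h a b c d.
  have := congr1 (fun F : T4 R k => F a b c d) (part2 GT Gu (rn _ ral) (rn _ rbe) h).
  by rewrite /add4 /scl4.
- move=> al be ral rbe h a b c d.
  have := congr1 (fun F : T4 R k => F a b c d) (part3 GT Gu (rn _ ral) (rn _ rbe) h).
  by rewrite /add4 /scl4.
- move=> B iota hcl.
pose e := fun I : Ix k l => iota (phi R I.1.1 I.1.2 I.2).
have anti : forall I J, e I * e J + e J * e I = (qq G I J)%:A.
  move=> [[a1 b1] g1] [[c1 d1] h1]; rewrite /e /= (anti_cl GT hcl); [by rewrite (q_phi GT) | exact: phi_sym | exact: phi_sym].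
have qsym : forall I J : Ix k l, qq G I J = qq G J I.
  move=> I J; case: I => [[a1 b1] g1]; case: J => [[c1 d1] h1]; rewrite /qq /= eq_sym (Gsym GT a1 c1) (Gsym GT b1 d1).
  rewrite (Gsym GT a1 d1) (Gsym GT b1 c1); ring.
have Manti : forall i (I J : Ix k l), TT (Xt G (sr i)) (2%:R *: Rho i) I J =
                       - TT (Xt G (sr i)) (2%:R *: Rho i) J I.
  move=> i I J; rewrite /TT Xt_sym2 // (gam_anti (hRT i)); ring.
have Xs : forall x a b c d, Xt G x a b c d = Xt G x b a c d by move=> *; apply: Xt_sym1.
move=> i j; rewrite !Jhat_Q -/e.
set Mi := TT (Xt G (sr i)) _; set Mj := TT (Xt G (sr j)) _.
have hMi : forall I J, Mi I J = - Mi J I by exact: Manti.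
have hMj : forall I J, Mj I J = - Mj J I by exact: Manti.
rewrite (Q_br anti qsym hMi hMj).
have XsI := Xs (sr i); have XsJ := Xs (sr j).
split.
  + move=> hij.
    have hii := hs i; have hjj := hs j.
    have hij' : kform G (sr i) (sr j) = -1 by rewrite hA hij.
    pose P := fun I J => 2 * (pr (qq G) Mi Mj I J - pr (qq G) Mj Mi I J).
    have hP : forall I J, P I J = - P J I.
      move=> I J; rewrite /P (pr_anti qsym hMi hMj I J) (pr_anti qsym hMj hMi I J); ring.
    rewrite (Q_br anti qsym hMi hP) -QN; apply: Q_ext => I J.
    set Gi := 2%:R *: Rho i; set Gj := 2%:R *: Rho j.
    set Xi := Xt G (sr i); set Xj := Xt G (sr j).
    set C1 := contr G Xi Xj; set C2 := contr G Xj Xi.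
    have Pe : forall I J, P I J = 2 * (TT C1 (Gi *m Gj) I J - TT C2 (Gj *m Gi) I J).
      by move=> I' J'; rewrite /P (prodq G Xi _ _ XsJ) (prodq G Xj _ _ XsI).
    have C1s := contr_sym1 G Xj XsI; have C2s := contr_sym1 G Xi XsJ.
    rewrite (pr_extr _ _ Pe) pr_linr (pr_extl _ _ Pe) pr_linl.
    rewrite (prodq G Xi _ _ C1s) (prodq G Xi _ _ C2s) (prodq G C1 _ _ XsI) (prodq G C2 _ _ XsI).
    have [g1 g2 g3 g4] := gam_rel (hsq i) ((krel i j).1 hij).
    rewrite g1 g2 g3 g4 /TT.
    have F : add4 (contr G Xi (add4 C1 C2)) (contr G (add4 C1 C2) Xi) = scl4 2^-1 (scl4 2^-1 Xj).
      have -> : add4 C1 C2 = scl4 2^-1 (Xt G (sr i + sr j)) := part2 GT Gu hii hjj hij'.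
      rewrite contr_sclr contr_scll -(part3' GT Gu hii hjj hij').
      by apply: fext4 => *; rewrite /add4 /scl4; ring.
    rewrite (contr_addr G Xi C1 C2) (contr_addl G C1 C2 Xi) in F.
    have := congr1 (fun F : T4 R k => F I.1.1 I.1.2 J.1.1 J.1.2) F; rewrite /add4 /scl4 => h.
    rewrite /Mj /TT !mxNE; exact: solve4 h.
  + move=> hij; have hij' : kform G (sr i) (sr j) = 0 by rewrite hA hij.
    apply: Q0 => I J; rewrite (prodq G _ _ _ XsJ) (prodq G _ _ _ XsI).
    rewrite (part1 GT Gu (hs i) (hs j) hij') (gam_comm ((krel i j).2 hij)).
    by rewrite subrr mulr0.
Qed.
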